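(* Let $l\in\frac12\mathbb N$, $\mathfrak g=\mathfrak g^{(l)}$, and let $U(\mathfrak g)^{(f)}$ be the localization of $U(\mathfrak g)$ at $\{f^i:i\ge0\}$. For every $x\in\mathbb C$ there is a unique algebra automorphism $\theta_x$ of $U(\mathfrak g)^{(f)}$ such that $\theta_x(f)=f$, $\theta_x(h)=h-2x$, $\theta_x(e)=e+x(h-1-x)f^{-1}$ and $$\theta_x(p_j)=\sum_{k=0}^{2l-j}(-1)^k\binom{x}{k}\frac{(2l-j)!}{(2l-j-k)!}f^{-k}p_{j+k},\qquad j=0,1,\dots,2l.$$
   Context: For $l\in\frac12\mathbb N$, $\mathfrak g^{(l)}$ is the complex Lie algebra with basis $e,h,f,p_0,\dots,p_{2l}$ and brackets $[h,e]=2e$, $[h,f]=-2f$, $[e,f]=h$, $[h,p_k]=2(l-k)p_k$, $[e,p_k]=kp_{k-1}$, $[f,p_k]=(2l-k)p_{k+1}$ ($p_{-1}=p_{2l+1}=0$), $[p_k,p_{k'}]=0$. Since $\mathrm{ad}\,f$ is locally nilpotent on $U(\mathfrak g)$, $\{f^i\}$ is an Ore set. For $x\in\mathbb C$, $\binom{x}{k}=\frac{x(x-1)\cdots(x-k+1)}{k!}$. *)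

(* Defs.v *)
From HB Require Import structures.
From mathcomp Require Import all_boot all_order all_algebra.
Set Implicit Arguments. Unset Strict Implicit. Unset Printing Implicit Defensive.
Import Order.TTheory GRing.Theory Num.Theory.
Local Open Scope ring_scope.

Definition comm (R : pzRingType) (a b : R) : R := a * b - b * a.

Definition binomC (C : fieldType) (x : C) (k : nat) : C :=
  (\prod_(i < k) (x - i%:R)) / (k`!)%:R.

Definition alg_hom (C : fieldType) (A B : algType C) (phi : A -> B) : Prop :=
  [/\ forall a b, phi (a + b) = phi a + phi b,
      forall (c : C) a, phi (c *: a) = c *: phi a,
      forall a b, phi (a * b) = phi a * phi b
    & phi 1 = 1].

(* Elements e,h,f,p_0..p_n (n = 2l) of an algebra satisfying the bracket
   relations of g^(l), brackets being commutators. p : nat -> A, only the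
   values p 0 .. p n are used (p_{-1} and p_{n+1} occur with coefficient 0). *)
Definition g_rels (C : fieldType) (n : nat) (A : algType C)
    (e h f : A) (p : nat -> A) : Prop :=
  [/\ comm h e = e *+ 2, comm h f = - (f *+ 2) & comm e f = h] /\
  [/\ forall k, (k <= n)%N -> comm h (p k) = p k *~ (n%:Z - (2 * k)%:Z),
      forall k, (k <= n)%N -> comm e (p k) = p k.-1 *+ k,
      forall k, (k <= n)%N -> comm f (p k) = p k.+1 *+ (n - k)
    & forall k k', (k <= n)%N -> (k' <= n)%N -> comm (p k) (p k') = 0].

(* (A, e, h, f, p, finv) is the localization U(g^(l))^(f) of the enveloping
   algebra at the Ore set {f^i}, with its generators and finv = f^{-1},
   characterized by its universal property: algebra maps out of it correspond
   to images of the generators satisfying the relations of g with f invertible. *)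
Definition is_loc_U (C : fieldType) (n : nat) (A : algType C)
    (e h f : A) (p : nat -> A) (finv : A) : Prop :=
  [/\ g_rels n e h f p, f * finv = 1, finv * f = 1 &
   forall (B : algType C) (e' h' f' : B) (p' : nat -> B) (finv' : B),
     g_rels n e' h' f' p' -> f' * finv' = 1 -> finv' * f' = 1 ->
     (exists phi : A -> B, alg_hom phi /\ phi e = e' /\ phi h = h' /\
        phi f = f' /\ forall k, (k <= n)%N -> phi (p k) = p' k) /\
     (forall phi psi : A -> B, alg_hom phi -> alg_hom psi ->
        phi e = psi e -> phi h = psi h -> phi f = psi f ->
        (forall k, (k <= n)%N -> phi (p k) = psi (p k)) ->
        phi =1 psi)].

(* Main.v *)
Require Import Defs.
From HB Require Import structures.
From mathcomp Require Import all_boot all_order all_algebra.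
From mathcomp Require Import ring zify.
Import Order.TTheory GRing.Theory Num.Theory.
Local Open Scope ring_scope.
Set Implicit Arguments. Unset Strict Implicit.
From Stdlib Require Import FunctionalExtensionality.
Section PF.
Variables (C : numFieldType) (A : algType C).

Definition pf (F : C -> A) := exists (I : finType) (deg : I -> nat) (a : I -> A),
  forall x, F x = \sum_(i : I) x ^+ deg i *: a i.

Lemma pf_ext F G : pf F -> (forall x, F x = G x) -> pf G.
Proof. by move=> [I [d [a Ha]]] FG; exists I, d, a => x; rewrite -FG. Qed.

Lemma pf_const (a : A) : pf (fun _ => a).
Proof. by exists 'I_1, (fun _ => 0%N), (fun _ => a) => x; rewrite big_ord1 expr0 scale1r. Qed.

Lemma pf_X : pf (fun x => x%:A).
Proof. by exists 'I_1, (fun _ => 1%N), (fun _ => 1) => x; rewrite big_ord1 expr1. Qed.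

Lemma pf_add F G : pf F -> pf G -> pf (fun x => F x + G x).
Proof.
move=> [I [d [a Ha]]] [J [d' [b Hb]]].
exists (I + J)%type, (fun i => match i with inl i => d i | inr j => d' j end),
  (fun i => match i with inl i => a i | inr j => b j end) => x.
by rewrite big_sumType /= Ha Hb.
Qed.

Lemma pf_opp F : pf F -> pf (fun x => - F x).
Proof.
move=> [I [d [a Ha]]]; exists I, d, (fun i => - a i) => x.
by rewrite Ha -sumrN; apply: eq_bigr => i _; rewrite scalerN.
Qed.

Lemma pf_mul F G : pf F -> pf G -> pf (fun x => F x * G x).
Proof.
move=> [I [d [a Ha]]] [J [d' [b Hb]]].
exists (I * J)%type, (fun i => (d i.1 + d' i.2)%N), (fun i => a i.1 * b i.2) => x.
rewrite Ha Hb mulr_suml -(pair_bigA _ (fun i j => x ^+ (d i + d' j) *: (a i * b j))) /=.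
apply: eq_bigr => i _.
rewrite mulr_sumr; apply: eq_bigr => j _.
by rewrite -scalerAl -scalerAr scalerA exprD.
Qed.

Lemma pf_sub F G : pf F -> pf G -> pf (fun x => F x - G x).
Proof. by move=> hF hG; apply: pf_add => //; apply: pf_opp. Qed.

Lemma pf_scal (S : C -> C) F : pf (fun x => (S x)%:A) -> pf F -> pf (fun x => S x *: F x).
Proof. by move=> hS hF; apply: (pf_ext (pf_mul hS hF)) => x; rewrite mulr_algl. Qed.

Lemma pf_scale (c : C) F : pf F -> pf (fun x => c *: F x).
Proof. by move=> hF; exact: (@pf_scal (fun _ => c) F (pf_const c%:A) hF). Qed.

Lemma pf_natmul F k : pf F -> pf (fun x => F x *+ k).
Proof. by move=> hF; apply: (pf_ext (pf_scale (k%:R) hF)) => x; rewrite scaler_nat. Qed.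

Lemma pf_intmul F (k : int) : pf F -> pf (fun x => F x *~ k).
Proof. by move=> hF; apply: (pf_ext (pf_scale (k%:~R) hF)) => x; rewrite scaler_int. Qed.

Lemma pf_sum N (F : nat -> C -> A) : (forall i, pf (F i)) ->
  pf (fun x => \sum_(i < N) F i x).
Proof.
move=> hF; elim: N => [|N IH].
  by apply: (pf_ext (pf_const 0)) => x; rewrite big_ord0.
by apply: (pf_ext (pf_add IH (hF N))) => x; rewrite big_ord_recr.
Qed.

Lemma pf_sumn a b (F : nat -> C -> A) : (forall i, pf (F i)) ->
  pf (fun x => \sum_(a <= i < b) F i x).
Proof.
move=> hF; apply: (pf_ext (@pf_sum (b - a) (fun i => F (a + i)%N) (fun i => hF _))).
by move=> x; rewrite -[a in RHS]add0n big_addn big_mkord; apply: eq_bigr => i _; rewrite addnC.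
Qed.

Definition pfs (S : C -> C) := pf (fun x => (S x)%:A).

Lemma pfs_const c : pfs (fun _ => c).
Proof. exact: pf_const. Qed.
Lemma pfs_X : pfs (fun x => x).
Proof. exact: pf_X. Qed.
Lemma pfs_add S T : pfs S -> pfs T -> pfs (fun x => S x + T x).
Proof. by move=> hS hT; apply: (pf_ext (pf_add hS hT)) => x; rewrite scalerDl. Qed.
Lemma pfs_opp S : pfs S -> pfs (fun x => - S x).
Proof. by move=> hS; apply: (pf_ext (pf_opp hS)) => x; rewrite scaleNr. Qed.
Lemma pfs_sub S T : pfs S -> pfs T -> pfs (fun x => S x - T x).
Proof. by move=> hS hT; apply: pfs_add => //; apply: pfs_opp. Qed.
Lemma pfs_mul S T : pfs S -> pfs T -> pfs (fun x => S x * T x).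
Proof.
by move=> hS hT; apply: (pf_ext (pf_mul hS hT)) => x; rewrite mulr_algl scalerA.
Qed.
Lemma pfs_exp S k : pfs S -> pfs (fun x => S x ^+ k).
Proof.
move=> hS; elim: k => [|k IH]; first by apply: (pf_ext (pfs_const 1)) => x; rewrite expr0.
by apply: (pf_ext (pfs_mul IH hS)) => x; rewrite exprSr.
Qed.
Lemma pfs_prod N (S : nat -> C -> C) : (forall i, pfs (S i)) ->
  pfs (fun x => \prod_(i < N) S i x).
Proof.
move=> hS; elim: N => [|N IH].
  by apply: (pf_ext (pfs_const 1)) => x; rewrite big_ord0.
by apply: (pf_ext (pfs_mul IH (hS N))) => x; rewrite big_ord_recr.
Qed.

Lemma pf_vanish F : pf F -> (forall m : nat, F m%:R = 0) -> forall x, F x = 0.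
Proof.
move=> [I [d [a Ha]]] H0.
set D := (\max_(i : I) d i).+1.
have dlt i : (d i < D)%N by rewrite ltnS; exact: leq_bigmax.
pose q i : 'I_D := Ordinal (dlt i).
pose G (k : 'I_D) := \sum_(i | q i == k) a i.
have HF x : F x = \sum_(k < D) x ^+ k *: G k.
  rewrite Ha (partition_big q xpredT) //=; apply: eq_bigr => k _.
  rewrite scaler_sumr; apply: eq_bigr => i /eqP <-; done.
suff G0 : forall k, G k = 0.
  by move=> x; rewrite HF big1 // => k _; rewrite G0 scaler0.
pose V : 'M[C]_D := Vandermonde D (\row_(j < D) (j%:R : C)).
have Vu : V \in unitmx.
  rewrite unitmxE unitfE det_Vandermonde; apply/prodf_neq0 => i _.
  apply/prodf_neq0 => j ij; rewrite !mxE subr_eq0 eqr_nat.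
  by rewrite neq_ltn ij orbT.
have HV j : \sum_(i < D) V i j *: G i = 0.
  by rewrite -[RHS](H0 j) HF; apply: eq_bigr => i _; rewrite !mxE.
move=> k; have := congr1 (fun M : 'M[C]_D => \sum_(i < D) M i k *: G i) (mulmxV Vu).
rewrite [RHS](bigD1 k) //= [in RHS]big1 => [|i ik]; last by rewrite mxE (negbTE ik) scale0r.
rewrite mxE eqxx scale1r addr0 => <-.
under eq_bigr do rewrite mxE scaler_suml.
rewrite exchange_big /= big1 // => j _.
under eq_bigr do rewrite mulrC -scalerA.
by rewrite -scaler_sumr HV scaler0.
Qed.
End PF.
Section Scal.
Variable C : numFieldType.

Lemma natr_neq0 (k : nat) : (k.+1%:R : C) != 0.
Proof. by rewrite pnatr_eq0. Qed.
Lemma fact_neq0 (k : nat) : ((k`!)%:R : C) != 0.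
Proof. by rewrite pnatr_eq0 -lt0n fact_gt0. Qed.

Lemma binomC0 (x : C) : binomC x 0 = 1.
Proof. by rewrite /binomC big_ord0 fact0 divr1. Qed.

Lemma binomC_0S k : binomC (0 : C) k.+1 = 0.
Proof. by rewrite /binomC big_ord_recl subrr !mul0r. Qed.

Lemma binomC_S (x : C) k : binomC (x + 1) k.+1 = binomC x k.+1 + binomC x k.
Proof.
have L : \prod_(i < k.+1) (x + 1 - i%:R) = (x + 1) * \prod_(i < k) (x - i%:R).
  rewrite big_ord_recl subr0; congr (_ * _); apply: eq_bigr => i _.
  by rewrite lift0 -natr1; ring.
have R : \prod_(i < k.+1) (x - i%:R) = (\prod_(i < k) (x - i%:R)) * (x - k%:R).
  by rewrite big_ord_recr.
rewrite /binomC L R factS natrM.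
have h1 := natr_neq0 k; have h2 := fact_neq0 k.
set Q := \prod_(i < k) _. rewrite -natr1 in h1 *. by field; rewrite ?h1 ?h2.
Qed.

Definition cf (x : C) (N k : nat) : C :=
  (-1) ^+ k * binomC x k * (N`!)%:R / ((N - k)`!)%:R.

Lemma cf0 x N : cf x N 0 = 1.
Proof. by rewrite /cf binomC0 subn0 expr0 !mul1r mulfV ?fact_neq0. Qed.

Lemma cf_step x N k : (k < N)%N ->
  cf x N k.+1 - cf x N k * (N - k)%:R = cf (x + 1) N k.+1.
Proof.
move=> kN; rewrite /cf binomC_S -(subnSK kN) factS natrM exprS.
have h1 := natr_neq0 (N - k.+1); have h2 := fact_neq0 (N - k.+1).
set s := (-1) ^+ k. set r := (N - k.+1)%N. set F := (N`!)%:R. rewrite -natr1 in h1 *. by field; rewrite ?h1 ?h2.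
Qed.
End Scal.
Section Main.
Variables (C : numFieldType) (n : nat) (A : algType C) (e h f : A) (p : nat -> A) (g : A).
Hypotheses (Hr : g_rels n e h f p) (fg : f * g = 1) (gf : g * f = 1).

Definition E (x : C) := e + x *: ((h - (1 + x)%:A) * g).
Definition H (x : C) := h - (2%:R * x)%:A.
Definition P (x : C) j := \sum_(0 <= k < (n - j).+1) cf x (n - j) k *: (g ^+ k * p (j + k)%N).
Definition Ad m a := g ^+ m * a * f ^+ m.

Lemma fgC : GRing.comm f g. Proof. by rewrite /GRing.comm fg gf. Qed.
Lemma fgm m : f ^+ m * g ^+ m = 1.
Proof. by rewrite -exprMn_comm ?fg ?expr1n //; exact: fgC. Qed.
Lemma gfm m : g ^+ m * f ^+ m = 1.
Proof. by rewrite -exprMn_comm ?gf ?expr1n //; apply/esym/fgC. Qed.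

Lemma AdD m a b : Ad m (a + b) = Ad m a + Ad m b.
Proof. by rewrite /Ad mulrDr mulrDl. Qed.
Lemma Ad0 m : Ad m 0 = 0.
Proof. by rewrite /Ad mulr0 mul0r. Qed.
Lemma AdN m a : Ad m (- a) = - Ad m a.
Proof. by rewrite /Ad mulrN mulNr. Qed.
Lemma AdB m a b : Ad m (a - b) = Ad m a - Ad m b.
Proof. by rewrite AdD AdN. Qed.
Lemma AdZ m c a : Ad m (c *: a) = c *: Ad m a.
Proof. by rewrite /Ad -scalerAr -scalerAl. Qed.
Lemma AdMn m a k : Ad m (a *+ k) = Ad m a *+ k.
Proof. by rewrite -!scaler_nat AdZ. Qed.
Lemma AdMz m a k : Ad m (a *~ k) = Ad m a *~ k.
Proof. by rewrite -!scaler_int AdZ. Qed.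
Lemma AdM m a b : Ad m (a * b) = Ad m a * Ad m b.
Proof. by rewrite /Ad !mulrA -[g ^+ m * a * f ^+ m * g ^+ m]mulrA fgm mulr1. Qed.
Lemma Ad1 m : Ad m 1 = 1.
Proof. by rewrite /Ad mulr1 gfm. Qed.
Lemma AdC m c : Ad m (c%:A) = c%:A.
Proof. by rewrite AdZ Ad1. Qed.
Lemma Adg m : Ad m g = g.
Proof. by rewrite /Ad -exprSr exprS -mulrA gfm mulr1. Qed.
Lemma Adf m : Ad m f = f.
Proof. by rewrite /Ad -mulrA -exprS exprSr mulrA gfm mul1r. Qed.
Lemma AdX m k : Ad m (g ^+ k) = g ^+ k.
Proof.
elim: k => [|k IH]; first by rewrite expr0 Ad1.
by rewrite exprS AdM IH Adg.
Qed.
Lemma Ad_sum m N (F : nat -> A) : Ad m (\sum_(i < N) F i) = \sum_(i < N) Ad m (F i).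
Proof. exact: (big_morph (Ad m) (AdD m) (Ad0 m)). Qed.
Lemma Ad_comm m a b : comm (Ad m a) (Ad m b) = Ad m (comm a b).
Proof. by rewrite /comm AdB !AdM. Qed.
Lemma AdS m a : Ad m.+1 a = Ad 1 (Ad m a).
Proof. by rewrite /Ad [g ^+ _.+1]exprS [f ^+ _.+1]exprSr !expr1 !mulrA. Qed.
Lemma Ad0a a : Ad 0 a = a.
Proof. by rewrite /Ad !expr0 mul1r mulr1. Qed.
Lemma AdA m m' a : Ad m (Ad m' a) = Ad (m + m') a.
Proof. by elim: m => [|m IH]; rewrite ?Ad0a // AdS IH -AdS. Qed.

Lemma rels_Ad m : g_rels n (Ad m e) (Ad m h) (Ad m f) (fun j => Ad m (p j)).
Proof.
case: Hr => [[Rhe Rhf Ref] [Rhp Rep Rfp Rpp]].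
split; split; rewrite ?Ad_comm.
- by rewrite Rhe AdMn.
- by rewrite Rhf AdN AdMn.
- by rewrite Ref.
- by move=> k kn; rewrite Ad_comm Rhp // AdMz.
- by move=> k kn; rewrite Ad_comm Rep // AdMn.
- by move=> k kn; rewrite Ad_comm Rfp // AdMn.
- by move=> k k' kn kn'; rewrite Ad_comm Rpp // Ad0.
Qed.


Lemma gh : g * h = h * g - g *+ 2.
Proof.
case: Hr => [[Rhe Rhf Ref] _].
have := congr1 (fun z => g * z * g) Rhf; rewrite /comm /=.
rewrite mulrBr mulrBl !mulrA gf mul1r -(mulrA _ f g) fg mulr1.
rewrite mulrN mulNr mulrnAr mulrnAl gf mul1r => /eqP; rewrite subr_eq => /eqP ->.
by rewrite addrC.
Qed.

Lemma Ad1h : Ad 1 h = h - 1 *+ 2.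
Proof.
case: Hr => [[Rhe Rhf Ref] _].
move: Rhf; rewrite /comm => /eqP; rewrite subr_eq => /eqP Rhf.
by rewrite /Ad !expr1 -mulrA Rhf mulrDr mulrN mulrnAr gf mulrA gf mul1r addrC.
Qed.

Lemma Ad1e : Ad 1 e = e + (h * g - g *+ 2).
Proof.
case: Hr => [[Rhe Rhf Ref] _].
move: Ref; rewrite /comm => /eqP; rewrite subr_eq => /eqP Ref.
by rewrite /Ad !expr1 -mulrA Ref mulrDr mulrA gf mul1r gh addrC.
Qed.

Lemma Ad1p a : (a <= n)%N -> Ad 1 (p a) = p a - g * p a.+1 *+ (n - a).
Proof.
case: Hr => [_ [Rhp Rep Rfp Rpp]] an.
have := Rfp a an; rewrite /comm => /eqP; rewrite subr_eq addrC -subr_eq => /eqP Ef.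
by rewrite /Ad !expr1 -mulrA -Ef mulrBr mulrA gf mul1r mulrnAr.
Qed.

Lemma AdH m : Ad m h = H m%:R.
Proof.
elim: m => [|m IH]; first by rewrite Ad0a /H mulr0 scale0r subr0.
rewrite AdS IH /H AdB AdC Ad1h -[1 *+ 2]scaler_nat -addrA -opprD -scalerDl.
by congr (_ - _%:A); rewrite -[m.+1]addn1 natrD; ring.
Qed.

Definition NE (a b c : C) := a *: e + b *: (h * g) + c *: g.
Lemma NE_add a b c a' b' c' : NE a b c + NE a' b' c' = NE (a + a') (b + b') (c + c').
Proof. by rewrite /NE addrACA [X in X + _]addrACA -!scalerDl. Qed.
Lemma NE_scale s a b c : s *: NE a b c = NE (s * a) (s * b) (s * c).
Proof. by rewrite /NE !scalerDr !scalerA. Qed.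
Lemma E_NE x : E x = NE 1 x (- (x * (1 + x))).
Proof. by rewrite /E /NE mulrBl mulr_algl scalerBr scalerA scale1r scaleNr addrA. Qed.
Lemma Ad1_NE a b c : Ad 1 (NE a b c) = NE a (a + b) (c - 2%:R * a - 2%:R * b).
Proof.
have He : Ad 1 e = NE 1 1 (- 2%:R).
  by rewrite Ad1e /NE !scale1r scaleNr scaler_nat addrA.
have Hhg : Ad 1 (h * g) = NE 0 1 (- 2%:R).
  by rewrite AdM Adg Ad1h mulrBl mulrnAl mul1r /NE scale0r add0r scale1r scaleNr scaler_nat.
rewrite {1}/NE !AdD !AdZ Adg He Hhg.
have -> : c *: g = NE 0 0 c by rewrite /NE !scale0r !add0r.
rewrite !NE_scale !NE_add; congr NE; ring.
Qed.

Lemma AdE m : Ad m e = E m%:R.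
Proof.
elim: m => [|m IH]; first by rewrite Ad0a /E scale0r addr0.
rewrite AdS IH !E_NE Ad1_NE; congr NE; rewrite -?[m.+1]addn1 ?natrD; ring.
Qed.


Lemma Ad1P x j : (j <= n)%N -> Ad 1 (P x j) = P (x + 1) j.
Proof.
move=> jn; rewrite /P !big_mkord (big_morph (Ad 1) (AdD 1) (Ad0 1)).
set N := (n - j)%N.
have T k : (k < N.+1)%N -> Ad 1 (cf x N k *: (g ^+ k * p (j + k)%N)) =
   cf x N k *: (g ^+ k * p (j + k)%N) -
   (cf x N k * (N - k)%:R) *: (g ^+ k.+1 * p (j + k.+1)%N).
  move=> kN; rewrite AdZ AdM AdX Ad1p; last by rewrite /N in kN; lia.
  rewrite mulrBr scalerBr [g ^+ k * (_ *+ _)]mulrnAr mulrA -exprSr addnS subnDA -/N -scaler_nat scalerA.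
  done.
under eq_bigr => i _ do rewrite (T _ (ltn_ord i)).
rewrite sumrB [X in _ - X]big_ord_recr /= subnn mulr0 scale0r addr0.
rewrite big_ord_recl [RHS]big_ord_recl /= !cf0 -addrA; congr (_ + _).
rewrite -sumrB; apply: eq_bigr => i _; rewrite -scalerBl (_ : bump 0 i = i.+1) // cf_step //.
Qed.

Lemma P0 j : P 0 j = p j.
Proof.
rewrite /P big_mkord big_ord_recl cf0 expr0 mul1r addn0 scale1r big1 ?addr0 // => i _.
by rewrite /cf lift0 binomC_0S mulr0 !mul0r scale0r.
Qed.

Lemma AdP m j : (j <= n)%N -> Ad m (p j) = P m%:R j.
Proof.
move=> jn; elim: m => [|m IH]; first by rewrite Ad0a P0.
by rewrite AdS IH Ad1P // natr1.
Qed.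

Lemma pfs_binom S k : pfs A S -> pfs A (fun x => binomC (S x) k).
Proof.
move=> hS.
exact: (pfs_mul (@pfs_prod _ _ k (fun i x => S x - i%:R) (fun i => pfs_sub hS (pfs_const _ i%:R))) (pfs_const _ _)).
Qed.

Lemma pfs_cf S N k : pfs A S -> pfs A (fun x => cf (S x) N k).
Proof.
move=> hS.
exact: (pfs_mul (pfs_mul (pfs_mul (pfs_const _ _) (pfs_binom k hS)) (pfs_const _ _)) (pfs_const _ _)).
Qed.

Lemma pf_Pc S j : pfs A S -> pf (fun x => P (S x) j).
Proof.
move=> hS; rewrite /P; apply: pf_sumn => k.
exact: (pf_scal (pfs_cf _ _ hS) (pf_const _)).
Qed.

Lemma pf_Ec S : pfs A S -> pf (fun x => E (S x)).
Proof.
move=> hS.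
exact: (pf_add (pf_const e) (pf_scal hS (pf_mul (pf_sub (pf_const h) (pfs_add (pfs_const _ 1) hS)) (pf_const g)))).
Qed.

Lemma pf_Hc S : pfs A S -> pf (fun x => H (S x)).
Proof. by move=> hS; exact: (pf_sub (pf_const h) (pfs_mul (pfs_const _ 2%:R) hS)). Qed.

Lemma pf_comm (F G : C -> A) : pf F -> pf G -> pf (fun x => comm (F x) (G x)).
Proof. by move=> hF hG; exact: (pf_sub (pf_mul hF hG) (pf_mul hG hF)). Qed.

Lemma pf_eq (F G : C -> A) : pf F -> pf G -> (forall m : nat, F m%:R = G m%:R) ->
  forall x, F x = G x.
Proof.
move=> hF hG hm x; apply/eqP; rewrite -subr_eq0; apply/eqP.
by apply: (pf_vanish (pf_sub hF hG)) => m; rewrite hm subrr.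
Qed.

Lemma pf_P j : pf (fun x => P x j). Proof. exact: (pf_Pc j (pfs_X _)). Qed.
Lemma pf_E : pf E. Proof. exact: (pf_Ec (pfs_X _)). Qed.
Lemma pf_H : pf H. Proof. exact: (pf_Hc (pfs_X _)). Qed.

Lemma rels_x x : g_rels n (E x) (H x) f (P x).
Proof.
split; split.
- apply: (@pf_eq (fun y => comm (H y) (E y)) (fun y => E y *+ 2)).
  + exact: pf_comm pf_H pf_E.
  + exact: pf_natmul pf_E.
  + by move=> m; case: (rels_Ad m) => [[R _ _] _]; rewrite AdE AdH in R.
- apply: (@pf_eq (fun y => comm (H y) f) (fun y => - (f *+ 2))).
  + exact: pf_comm pf_H (pf_const _).
  + exact: pf_const.
  + by move=> m; case: (rels_Ad m) => [[_ R _] _]; rewrite Adf AdH in R.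
- apply: (@pf_eq (fun y => comm (E y) f) H).
  + exact: pf_comm pf_E (pf_const _).
  + exact: pf_H.
  + by move=> m; case: (rels_Ad m) => [[_ _ R] _]; rewrite Adf AdH AdE in R.
- move=> k kn.
  apply: (@pf_eq (fun y => comm (H y) (P y k)) (fun y => P y k *~ (n%:Z - (2 * k)%:Z))).
  + exact: pf_comm pf_H (pf_P k).
  + exact: pf_intmul (pf_P k).
  + by move=> m; case: (rels_Ad m) => [_ [R _ _ _]]; have := R k kn; rewrite AdH AdP.
- move=> k kn.
  apply: (@pf_eq (fun y => comm (E y) (P y k)) (fun y => P y k.-1 *+ k)).
  + exact: pf_comm pf_E (pf_P k).
  + exact: pf_natmul (pf_P _).
  + move=> m; case: (rels_Ad m) => [_ [_ R _ _]]; have := R k kn.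
    by rewrite AdE !AdP // (leq_trans (leq_pred k) kn).
- move=> k kn.
  apply: (@pf_eq (fun y => comm f (P y k)) (fun y => P y k.+1 *+ (n - k))).
  + exact: pf_comm (pf_const _) (pf_P k).
  + exact: pf_natmul (pf_P _).
  + move=> m; case: (rels_Ad m) => [_ [_ _ R _]]; have := R k kn.
    rewrite Adf AdP // => ->.
    case: (ltnP k n) => [kn'|nk]; first by rewrite AdP.
    by have -> : (n - k)%N = 0%N by apply/eqP; rewrite subn_eq0.
- move=> k k' kn kn'.
  apply: (@pf_eq (fun y => comm (P y k) (P y k')) (fun _ => 0)).
  + exact: pf_comm (pf_P k) (pf_P k').
  + exact: pf_const.
  + by move=> m; case: (rels_Ad m) => [_ [_ _ _ R]]; have := R k k' kn kn'; rewrite !AdP.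
Qed.

Lemma AdE_gen m y : Ad m (E y) = E m%:R + y *: ((H m%:R - (1 + y)%:A) * g).
Proof. by rewrite {1}/E AdD AdZ AdM AdB AdC Adg AdE AdH. Qed.

Lemma AdP_gen m y j : (j <= n)%N ->
  Ad m (P y j) = \sum_(0 <= k < (n - j).+1) cf y (n - j) k *: (g ^+ k * P m%:R (j + k)%N).
Proof.
move=> jn; rewrite {1}/P (big_morph (Ad m) (AdD m) (Ad0 m)).
apply: eq_big_nat => k /andP[_ kN]; rewrite AdZ AdM AdX AdP //; lia.
Qed.

Lemma compE x y : E x + y *: ((H x - (1 + y)%:A) * g) = E (x + y).
Proof.
have step1 (m' : nat) x' : E x' + m'%:R *: ((H x' - (1 + m'%:R)%:A) * g) = E (x' + m'%:R).
  apply: (@pf_eq (fun x => E x + m'%:R *: ((H x - (1 + m'%:R)%:A) * g)) (fun x => E (x + m'%:R))).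
  + exact: (pf_add pf_E (pf_scale _ (pf_mul (pf_sub pf_H (pf_const _)) (pf_const _)))).
  + exact: (pf_Ec (pfs_add (pfs_X _) (pfs_const _ _))).
  + by move=> m; rewrite -[m%:R + m'%:R]natrD -[E (m + m')%:R]AdE -AdA AdE AdE_gen.
apply: (@pf_eq (fun y => E x + y *: ((H x - (1 + y)%:A) * g)) (fun y => E (x + y))).
+ exact: (pf_add (pf_const _) (pf_scal (pfs_X _) (pf_mul (pf_sub (pf_const _) (pfs_add (pfs_const _ 1) (pfs_X _))) (pf_const _)))).
+ exact: (pf_Ec (pfs_add (pfs_const _ x) (pfs_X _))).
+ by move=> m; rewrite step1.
Qed.

Lemma compP x y j : (j <= n)%N ->
  \sum_(0 <= k < (n - j).+1) cf y (n - j) k *: (g ^+ k * P x (j + k)%N) = P (x + y) j.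
Proof.
move=> jn.
have step1 (m' : nat) x' : \sum_(0 <= k < (n - j).+1) cf m'%:R (n - j) k *: (g ^+ k * P x' (j + k)%N)
    = P (x' + m'%:R) j.
  apply: (@pf_eq (fun x => \sum_(0 <= k < (n - j).+1) cf m'%:R (n - j) k *: (g ^+ k * P x (j + k)%N))
     (fun x => P (x + m'%:R) j)).
  + by apply: pf_sumn => k; exact: (pf_scale _ (pf_mul (pf_const _) (pf_P _))).
  + exact: (pf_Pc _ (pfs_add (pfs_X _) (pfs_const _ _))).
  + by move=> m; rewrite -[m%:R + m'%:R]natrD -[P (m + m')%:R j]AdP // -AdA AdP // AdP_gen.
apply: (@pf_eq (fun y => \sum_(0 <= k < (n - j).+1) cf y (n - j) k *: (g ^+ k * P x (j + k)%N))
   (fun y => P (x + y) j)).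
+ by apply: pf_sumn => k; exact: (pf_scal (pfs_cf _ _ (pfs_X _)) (pf_const _)).
+ exact: (pf_Pc _ (pfs_add (pfs_const _ x) (pfs_X _))).
+ by move=> m; rewrite step1.
Qed.

Lemma E0 : E 0 = e. Proof. by rewrite /E scale0r addr0. Qed.
Lemma H0 : H 0 = h. Proof. by rewrite /H mulr0 scale0r subr0. Qed.
Lemma compH x y : H x - (2%:R * y)%:A = H (x + y).
Proof. by rewrite /H -addrA -opprD -scalerDl mulrDr. Qed.

Definition spec (phi : A -> A) x := alg_hom phi /\ phi e = E x /\ phi h = H x /\ phi f = f /\
  forall k, (k <= n)%N -> phi (p k) = P x k.

Lemma inv_comp (phi psi : A -> A) x y :
  (forall phi psi : A -> A, alg_hom phi -> alg_hom psi ->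
        phi e = psi e -> phi h = psi h -> phi f = psi f ->
        (forall k, (k <= n)%N -> phi (p k) = psi (p k)) -> phi =1 psi) ->
  spec phi x -> spec psi y -> x + y = 0 -> forall a, phi (psi a) = a.
Proof.
move=> U [hphi [phe [phh [phf php]]]] [hpsi [pse [psh [psf psp]]]] xy.
case: hphi => [pD pZ pM p1].
have p0 : phi 0 = 0 by have := pZ 0 0; rewrite !scale0r.
have pN a : phi (- a) = - phi a by rewrite -scaleN1r pZ scaleN1r.
have pB a b : phi (a - b) = phi a - phi b by rewrite pD pN.
have pC c : phi c%:A = c%:A by rewrite pZ p1.
have pg : phi g = g.
  by rewrite -[phi g]mulr1 -fg mulrA -phf -pM gf p1 mul1r.
have pX k : phi (g ^+ k) = g ^+ k.
  by elim: k => [|k IH]; rewrite ?expr0 ?p1 // exprS pM IH pg.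
have hc : alg_hom (fun a => phi (psi a)).
  case: hpsi => [qD qZ qM q1]; split.
  - by move=> a b; rewrite qD pD.
  - by move=> c a; rewrite qZ pZ.
  - by move=> a b; rewrite qM pM.
  - by rewrite q1 p1.
have hid : alg_hom (fun a : A => a) by split.
apply: (U _ _ hc hid) => /=.
- by rewrite pse /E pD pZ pM pB pC phe phh pg compE xy E0.
- by rewrite psh /H pB pC phh compH xy H0.
- by rewrite psf.
- move=> k kn; rewrite psp // /P (big_morph phi pD p0).
  rewrite -[RHS](P0 k) -xy -compP //; apply: eq_big_nat => i /andP[_ iN].
  by rewrite pZ pM pX php //; lia.
Qed.

End Main.

Theorem mainTheorem13 (C : numClosedFieldType) (n : nat) (A : algType C)
    (e h f : A) (p : nat -> A) (finv : A) :
  is_loc_U n e h f p finv ->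
  forall x : C,
  exists! theta : A -> A,
    [/\ alg_hom theta, bijective theta &
        theta f = f] /\ [/\
        theta h = h - (2%:R * x)%:A,
        theta e = e + x *: ((h - (1 + x)%:A) * finv)
      & forall j, (j <= n)%N ->
          theta (p j) =
          \sum_(0 <= k < (n - j).+1)
             ((-1) ^+ k * binomC x k * ((n - j)`!)%:R / ((n - j - k)`!)%:R)
               *: (finv ^+ k * p (j + k)%N)].
Proof.
move=> [Hr fg gf U] x.
have hom y : exists th, spec n e h f p finv th y.
  have [[th [hth [the [thh [thf thp]]]]] _] := U A _ _ _ _ _ (rels_x Hr fg gf y) fg gf.
  by exists th.
have uniq := (U A e h f p finv Hr fg gf).2.
have [th [hth [the [thh [thf thp]]]]] := hom x.
have [th' Hth'] := hom (- x).
exists th; split.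
  split; split => //.
  exists th'.
  - by apply: (inv_comp Hr fg gf uniq Hth' (conj hth (conj the (conj thh (conj thf thp))))); rewrite addNr.
  - by apply: (inv_comp Hr fg gf uniq (conj hth (conj the (conj thh (conj thf thp)))) Hth'); rewrite addrN.
move=> th2 [[hom2 _ f2] [h2 e2 p2]].
apply: functional_extensionality => a; apply: uniq => //.
- by rewrite the e2.
- by rewrite thh h2.
- by rewrite thf f2.
- by move=> k kn; rewrite thp // p2.
Qed.
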